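(* Let $I=(x_1,\ldots,x_n)$ be any list of items with sizes $x_j\in(1/3,1]$. Let $I'=(x'_1,\ldots,x'_n)$ be a list with sizes in $(0,1]$ such that $x'_i>x_i$ for a single index $i\in[n]$ and $x'_j=x_j$ for all $j\ne i$. Then $\mathrm{BF}(I)\le\mathrm{BF}(I')$.
   Context: The online algorithm Best Fit (BF) processes a list of items with sizes in $(0,1]$ in the given order and packs the current item into the fullest bin (largest current load, i.e. sum of sizes of items in it) into which it fits without exceeding total size $1$, opening a new unit-capacity bin if it fits into no existing bin; items are never moved. $\mathrm{BF}(I)$ denotes the number of bins Best Fit uses on list $I$. *)

(* Defs.v *)
From Stdlib Require Import Reals List Lra.
Open Scope R_scope.

(* Bins are represented by the list of their current loads, in opening order.
   [best_bin loads x] returns [Some k] where k is the index of a fullest bin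
   (largest load) into which x fits (load + x <= 1); ties are broken by the
   smallest index. *)
Fixpoint best_bin_aux (loads : list R) (x : R) (k : nat) (best : option (nat * R))
  : option (nat * R) :=
  match loads with
  | nil => best
  | l :: ls =>
      let best' :=
        if Rle_dec (l + x) 1 then
          match best with
          | None => Some (k, l)
          | Some (_, bl) => if Rlt_dec bl l then Some (k, l) else best
          end
        else best in
      best_bin_aux ls x (S k) best'
  end.

Definition best_bin (loads : list R) (x : R) : option nat :=
  match best_bin_aux loads x 0 None with
  | None => None
  | Some (k, _) => Some k
  end.

Fixpoint add_at (loads : list R) (k : nat) (x : R) : list R :=
  match loads, k with
  | nil, _ => nil
  | l :: ls, O => (l + x) :: ls
  | l :: ls, S k' => l :: add_at ls k' x
  end.

Definition bf_step (loads : list R) (x : R) : list R :=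
  match best_bin loads x with
  | Some k => add_at loads k x
  | None => loads ++ (x :: nil)
  end.

Definition bf_loads (I : list R) : list R := fold_left bf_step I nil.

Definition BF (I : list R) : nat := length (bf_loads I).

(* Main.v *)
Require Import Defs.
From Stdlib Require Import Reals List.
From Stdlib Require Import Lra Lia Permutation.
Open Scope R_scope.

Definition geb (t a : R) : bool := if Rle_dec t a then true else false.
Definition gtb (t a : R) : bool := if Rlt_dec t a then true else false.
Definition cnt (f : R -> bool) (X : list R) : nat := length (filter f X).

Lemma cnt_perm f X Y : Permutation X Y -> cnt f X = cnt f Y.
Proof.
  intro H; unfold cnt; induction H; simpl;
  try (destruct (f x)); try (destruct (f y)); simpl; lia.
Qed.

Lemma cnt_cons f a X : cnt f (a :: X) = ((if f a then 1 else 0) + cnt f X)%nat.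
Proof. unfold cnt; simpl; destruct (f a); reflexivity. Qed.

Lemma cnt_mono f g X : (forall a, In a X -> f a = true -> g a = true) ->
  (cnt f X <= cnt g X)%nat.
Proof.
  induction X as [|a X IH]; intro H; [apply le_n|].
  rewrite !cnt_cons.
  assert (IH' := IH (fun b Hb => H b (or_intror Hb))).
  specialize (H a (or_introl eq_refl)).
  destruct (f a), (g a); try lia; discriminate (H eq_refl).
Qed.

Lemma cnt_le_len f X : (cnt f X <= length X)%nat.
Proof. induction X; [apply le_n|]. simpl. rewrite cnt_cons. destruct (f a); lia. Qed.

Lemma cnt_all f X : (forall a, In a X -> f a = true) -> cnt f X = length X.
Proof.
  induction X as [|a X IH]; intro H; simpl; [reflexivity|].
  rewrite cnt_cons, (H a (or_introl eq_refl)), IH; auto.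
  intros b Hb; apply H; right; exact Hb.
Qed.

Lemma geb_true t a : t <= a -> geb t a = true.
Proof. unfold geb; destruct (Rle_dec t a); auto; lra. Qed.
Lemma geb_false t a : a < t -> geb t a = false.
Proof. unfold geb; destruct (Rle_dec t a); auto; lra. Qed.
Lemma geb_P t a : geb t a = true -> t <= a.
Proof. unfold geb; destruct (Rle_dec t a); auto; discriminate. Qed.
Lemma gtb_true t a : t < a -> gtb t a = true.
Proof. unfold gtb; destruct (Rlt_dec t a); auto; lra. Qed.
Lemma gtb_false t a : a <= t -> gtb t a = false.
Proof. unfold gtb; destruct (Rlt_dec t a); auto; lra. Qed.
Lemma gtb_P t a : gtb t a = true -> t < a.
Proof. unfold gtb; destruct (Rlt_dec t a); auto; discriminate. Qed.

Definition Abs (L A : list R) (p : nat) : Prop :=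
  exists D, Permutation L (A ++ D) /\ length D = p /\
    (forall d, In d D -> 2/3 < d) /\ (forall a, In a A -> 1/3 < a).

Inductive AStep (A : list R) (p : nat) (x : R) : list R -> nat -> Prop :=
| AS_new : (forall a, In a A -> 1 < a + x) -> AStep A p x (x :: A) p
| AS_fit : forall a0 A0, Permutation A (a0 :: A0) -> a0 + x <= 1 ->
    (forall a, In a A0 -> a + x <= 1 -> a <= a0) -> AStep A p x A0 (S p).

Definition anti (X : list R) :=
  forall a Y, Permutation X (a :: Y) -> forall b, In b Y -> 1 < a + b.

Definition Inv (A : list R) (p : nat) (A' : list R) (p' : nat) :=
  anti A' /\ (forall t, cnt (geb t) A <= cnt (geb t) A')%nat /\
  (forall t, cnt (gtb t) A <= cnt (gtb t) A')%nat /\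
  (length A + 2 * p = length A' + 2 * p')%nat.

Lemma anti_remove A a A0 : anti A -> Permutation A (a :: A0) -> anti A0.
Proof.
  intros H HP c Y HY b Hb.
  apply (H c (a :: Y)); [|right; exact Hb].
  eapply perm_trans; [exact HP|].
  eapply perm_trans; [apply perm_skip; exact HY|]. apply perm_swap.
Qed.

Lemma anti_add A x : anti A -> (forall a, In a A -> 1 < a + x) -> anti (x :: A).
Proof.
  intros H Hx c Y HY b Hb.
  assert (Hc : In c (x :: A)) by (apply (Permutation_in c (Permutation_sym HY)); left; auto).
  destruct Hc as [Hc | Hc].
  - subst c. apply Permutation_cons_inv in HY.
    specialize (Hx b (Permutation_in b (Permutation_sym HY) Hb)). lra.
  - apply in_split in Hc as [A1 [A2 HA]]. subst A.
    assert (HY2 : Permutation (c :: x :: A1 ++ A2) (c :: Y)).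
    { eapply perm_trans; [apply perm_swap|].
      eapply perm_trans; [|exact HY]. apply perm_skip.
      apply Permutation_middle. }
    apply Permutation_cons_inv in HY2.
    apply (Permutation_in b (Permutation_sym HY2)) in Hb.
    destruct Hb as [Hb | Hb].
    + subst b. specialize (Hx c (in_or_app A1 (c :: A2) c (or_intror (or_introl eq_refl)))). lra.
    + apply (H c (A1 ++ A2)); auto. apply Permutation_sym, Permutation_middle.
Qed.

Lemma inv_step A p A' p' x x' A2 p2 A2' p2' :
  Inv A p A' p' -> x <= x' ->
  AStep A p x A2 p2 -> AStep A' p' x' A2' p2' -> Inv A2 p2 A2' p2'.
Proof.
  intros [Hanti [Hge [Hgt Hlen]]] Hxx' HS HS'.
  destruct HS as [Hno | a0 A0 HPA Ha0 Hamax];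
  destruct HS' as [Hno' | b0 B0 HPB Hb0 Hbmax].
  -
    split; [apply anti_add; auto|]. split; [|split].
    + intro t; specialize (Hge t); rewrite !cnt_cons; unfold geb at 1 3;
      destruct (Rle_dec t x), (Rle_dec t x'); try lia; lra.
    + intro t; specialize (Hgt t); rewrite !cnt_cons; unfold gtb at 1 3;
      destruct (Rlt_dec t x), (Rlt_dec t x'); try lia; lra.
    + simpl; lia.
  -
    assert (HlA' := Permutation_length HPB). simpl in HlA'.
    assert (HbA : forall a, In a A -> b0 < a).
    { intros a Ha; specialize (Hno a Ha); lra. }
    assert (HeB : forall e, In e B0 -> x' < e).
    { intros e He; specialize (Hanti b0 B0 HPB e He); lra. }
    assert (HcA : cnt (gtb b0) A = length A) by (apply cnt_all; intros; apply gtb_true; auto).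
    assert (HcB : cnt (gtb b0) A' = cnt (gtb b0) B0).
    { rewrite (cnt_perm _ _ _ HPB), cnt_cons, gtb_false; lra || lia. }
    assert (Hl1 : (length A <= length B0)%nat).
    { specialize (Hgt b0). pose proof (cnt_le_len (gtb b0) B0). lia. }
    assert (Hl2 : (S (length A) <= length B0)%nat) by lia.
    split; [eapply anti_remove; eauto|]. split; [|split].
    + intro t. rewrite cnt_cons. destruct (Rle_dec t x).
      * rewrite (cnt_all (geb t) B0) by (intros e He; apply geb_true; specialize (HeB e He); lra).
        pose proof (cnt_le_len (geb t) A). destruct (geb t x); lia.
      * rewrite geb_false by lra. destruct (Rle_dec t b0).
        -- pose proof (cnt_le_len (geb t) A). specialize (Hgt b0).
           assert (cnt (gtb b0) B0 <= cnt (geb t) B0)%nat.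
           { apply cnt_mono; intros e He Hq; apply gtb_P in Hq; apply geb_true; lra. }
           lia.
        -- specialize (Hge t). rewrite (cnt_perm _ _ _ HPB), cnt_cons, geb_false in Hge by lra. lia.
    + intro t. rewrite cnt_cons. destruct (Rlt_dec t x).
      * rewrite (cnt_all (gtb t) B0) by (intros e He; apply gtb_true; specialize (HeB e He); lra).
        pose proof (cnt_le_len (gtb t) A). destruct (gtb t x); lia.
      * rewrite gtb_false by lra. destruct (Rlt_dec t b0).
        -- pose proof (cnt_le_len (gtb t) A). specialize (Hgt b0).
           assert (cnt (gtb b0) B0 <= cnt (gtb t) B0)%nat.
           { apply cnt_mono; intros e He Hq; apply gtb_P in Hq; apply gtb_true; lra. }
           lia.
        -- specialize (Hgt t). rewrite (cnt_perm _ _ _ HPB), cnt_cons, gtb_false in Hgt by lra. lia.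
    + simpl; lia.
  -
    assert (HlA := Permutation_length HPA). simpl in HlA.
    split; [apply anti_add; auto|]. split; [|split].
    + intro t; specialize (Hge t). rewrite (cnt_perm _ _ _ HPA), cnt_cons in Hge.
      rewrite cnt_cons. destruct (geb t a0), (geb t x'); lia.
    + intro t; specialize (Hgt t). rewrite (cnt_perm _ _ _ HPA), cnt_cons in Hgt.
      rewrite cnt_cons. destruct (gtb t a0), (gtb t x'); lia.
    + simpl; lia.
  -
    assert (HlA := Permutation_length HPA). simpl in HlA.
    assert (HlA' := Permutation_length HPB). simpl in HlA'.
    assert (Hk : (cnt (gtb (1 - x)) A <= cnt (gtb (1 - x)) B0)%nat).
    { specialize (Hgt (1 - x)). rewrite (cnt_perm _ _ _ HPB), cnt_cons, gtb_false in Hgt by lra. lia. }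
    assert (HkA : (cnt (gtb (1 - x)) A0 <= cnt (gtb (1 - x)) A)%nat).
    { rewrite (cnt_perm _ _ _ HPA), cnt_cons. lia. }
    split; [eapply anti_remove; eauto|]. split; [|split].
    + intro t; specialize (Hge t).
      rewrite (cnt_perm _ _ _ HPA), (cnt_perm _ _ _ HPB), !cnt_cons in Hge.
      destruct (Rle_dec t a0) as [Ht|Ht].
      * rewrite geb_true in Hge by lra. destruct (geb t b0); lia.
      * rewrite (geb_false t a0) in Hge by lra. destruct (Rle_dec t b0) as [Ht2|Ht2].
        -- assert (cnt (geb t) A0 <= cnt (gtb (1 - x)) A0)%nat.
           { apply cnt_mono; intros a Ha Hq; apply geb_P in Hq; apply gtb_true.
             destruct (Rle_dec (a + x) 1); [specialize (Hamax a Ha r); lra | lra]. }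
           assert (cnt (gtb (1 - x)) B0 <= cnt (geb t) B0)%nat.
           { apply cnt_mono; intros e He Hq; apply gtb_P in Hq; apply geb_true; lra. }
           lia.
        -- rewrite geb_false in Hge by lra. lia.
    + intro t; specialize (Hgt t).
      rewrite (cnt_perm _ _ _ HPA), (cnt_perm _ _ _ HPB), !cnt_cons in Hgt.
      destruct (Rlt_dec t a0) as [Ht|Ht].
      * rewrite gtb_true in Hgt by lra. destruct (gtb t b0); lia.
      * rewrite (gtb_false t a0) in Hgt by lra. destruct (Rlt_dec t b0) as [Ht2|Ht2].
        -- assert (cnt (gtb t) A0 <= cnt (gtb (1 - x)) A0)%nat.
           { apply cnt_mono; intros a Ha Hq; apply gtb_P in Hq; apply gtb_true.
             destruct (Rle_dec (a + x) 1); [specialize (Hamax a Ha r); lra | lra]. }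
           assert (cnt (gtb (1 - x)) B0 <= cnt (gtb t) B0)%nat.
           { apply cnt_mono; intros e He Hq; apply gtb_P in Hq; apply gtb_true; lra. }
           lia.
        -- rewrite gtb_false in Hgt by lra. lia.
    + lia.
Qed.

Lemma aux_spec x : forall loads k best,
  match best_bin_aux loads x k best with
  | None => best = None /\ forall l, In l loads -> 1 < l + x
  | Some (j, bl) =>
     (best = Some (j, bl) \/ ((k <= j)%nat /\ (j < k + length loads)%nat /\
        nth (j - k) loads 0 = bl /\ bl + x <= 1))
     /\ (forall l, In l loads -> l + x <= 1 -> l <= bl)
     /\ (forall j0 b0, best = Some (j0, b0) -> b0 <= bl)
  end.
Proof.
  induction loads as [|l ls IH]; intros k best.
  - simpl. destruct best as [[j bl]|].
    + split; [left; reflexivity|]. split; [intros _ []|]. intros j0 b0 H; inversion H; lra.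
    + split; [reflexivity| intros _ []].
  - cbn [best_bin_aux].
    destruct (Rle_dec (l + x) 1) as [Hf|Hf].
    + destruct best as [[j1 b1]|].
      * destruct (Rlt_dec b1 l) as [Hlt|Hlt].
        -- specialize (IH (S k) (Some (k, l))).
           destruct (best_bin_aux ls x (S k) (Some (k, l))) as [[j bl]|].
           ++ destruct IH as [H1 [H2 H3]]. specialize (H3 k l eq_refl).
              split; [right|split].
              ** destruct H1 as [H1|[Ha [Hb [Hc Hd]]]].
                 --- inversion H1; subst. simpl. rewrite Nat.sub_diag. repeat split; try lia; try lra.
                 --- simpl. replace (j - k)%nat with (S (j - S k)) by lia. repeat split; try lia; lra.
              ** intros l0 [E|E] Hl0; [subst; lra|]. apply H2; auto.
              ** intros j0 b0 E; inversion E; subst; lra.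
           ++ destruct IH as [IH _]; discriminate.
        -- specialize (IH (S k) (Some (j1, b1))).
           destruct (best_bin_aux ls x (S k) (Some (j1, b1))) as [[j bl]|].
           ++ destruct IH as [H1 [H2 H3]]. specialize (H3 j1 b1 eq_refl).
              split; [|split].
              ** destruct H1 as [H1|[Ha [Hb [Hc Hd]]]]; [left; exact H1|right].
                 simpl. replace (j - k)%nat with (S (j - S k)) by lia. repeat split; try lia; lra.
              ** intros l0 [E|E] Hl0; [subst; lra|]. apply H2; auto.
              ** intros j0 b0 E; inversion E; subst; lra.
           ++ destruct IH as [IH _]; discriminate.
      * specialize (IH (S k) (Some (k, l))).
        destruct (best_bin_aux ls x (S k) (Some (k, l))) as [[j bl]|].
        -- destruct IH as [H1 [H2 H3]]. specialize (H3 k l eq_refl).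
           split; [right|split].
           ** destruct H1 as [H1|[Ha [Hb [Hc Hd]]]].
              --- inversion H1; subst. simpl. rewrite Nat.sub_diag. repeat split; try lia; try lra.
              --- simpl. replace (j - k)%nat with (S (j - S k)) by lia. repeat split; try lia; lra.
           ** intros l0 [E|E] Hl0; [subst; lra|]. apply H2; auto.
           ** intros j0 b0 E; discriminate.
        -- destruct IH as [IH _]; discriminate.
    + specialize (IH (S k) best).
      destruct (best_bin_aux ls x (S k) best) as [[j bl]|].
      * destruct IH as [H1 [H2 H3]]. split; [|split; auto].
        -- destruct H1 as [H1|[Ha [Hb [Hc Hd]]]]; [left; exact H1|right].
           simpl. replace (j - k)%nat with (S (j - S k)) by lia. repeat split; try lia; lra.
        -- intros l0 [E|E] Hl0; [subst; lra|]. apply H2; auto.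
      * destruct IH as [H1 H2]. split; auto. intros l0 [E|E]; [subst; lra|]. auto.
Qed.

Lemma best_none L x : best_bin L x = None -> forall l, In l L -> 1 < l + x.
Proof.
  unfold best_bin. pose proof (aux_spec x L 0 None) as H.
  destruct (best_bin_aux L x 0 None) as [[j bl]|]; [discriminate|].
  intros _. apply H.
Qed.

Lemma best_some L x k : best_bin L x = Some k ->
  (k < length L)%nat /\ nth k L 0 + x <= 1 /\
  (forall l, In l L -> l + x <= 1 -> l <= nth k L 0).
Proof.
  unfold best_bin. pose proof (aux_spec x L 0 None) as H.
  destruct (best_bin_aux L x 0 None) as [[j bl]|]; [|discriminate].
  intro E; inversion E; subst.
  destruct H as [[H1|[Ha [Hb [Hc Hd]]]] [H2 _]]; [discriminate|].
  rewrite Nat.sub_0_r in Hc. subst bl. simpl in Hb. auto.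
Qed.

Lemma add_at_perm : forall L k x, (k < length L)%nat ->
  exists R, Permutation L (nth k L 0 :: R) /\
            Permutation (add_at L k x) ((nth k L 0 + x) :: R).
Proof.
  induction L as [|l L IH]; intros k x Hk; simpl in *; [lia|].
  destruct k as [|k].
  - exists L; split; apply Permutation_refl.
  - destruct (IH k x ltac:(lia)) as [R [H1 H2]]. exists (l :: R); split.
    + eapply perm_trans; [apply perm_skip, H1|]. apply perm_swap.
    + eapply perm_trans; [apply perm_skip, H2|]. apply perm_swap.
Qed.

Lemma step_abs L A p x : Abs L A p -> 1/3 < x ->
  exists A2 p2, AStep A p x A2 p2 /\ Abs (bf_step L x) A2 p2.
Proof.
  intros [D [HP [HD [HDg HA]]]] Hx.
  unfold bf_step. destruct (best_bin L x) as [k|] eqn:E.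
  - destruct (best_some _ _ _ E) as [Hk [Hfit Hmax]].
    destruct (add_at_perm L k x Hk) as [R [H1 H2]].
    set (l := nth k L 0) in *.
    assert (HinL : forall a, In a (A ++ D) -> In a L).
    { intros a Ha. exact (Permutation_in a (Permutation_sym HP) Ha). }
    assert (Hin : In l (A ++ D)).
    { apply (Permutation_in l HP). apply (Permutation_in l (Permutation_sym H1)). left; auto. }
    apply in_app_or in Hin. destruct Hin as [HlA | HlD]; [| specialize (HDg _ HlD); lra].
    assert (Hl3 := HA l HlA).
    apply in_split in HlA as [A1 [A2 HA12]].
    assert (HPA : Permutation A (l :: A1 ++ A2)).
    { rewrite HA12. apply Permutation_sym, Permutation_middle. }
    assert (HR : Permutation R ((A1 ++ A2) ++ D)).
    { apply Permutation_cons_inv with l.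
      eapply perm_trans; [apply Permutation_sym, H1|].
      eapply perm_trans; [exact HP|]. apply (Permutation_app_tail D HPA). }
    exists (A1 ++ A2), (S p). split.
    + apply AS_fit with l; auto.
      intros a Ha Hax. apply Hmax; auto. apply HinL. apply in_or_app; left.
      apply (Permutation_in a (Permutation_sym HPA)). right; auto.
    + exists ((l + x) :: D). split; [|split; [simpl; lia|split]].
      * eapply perm_trans; [exact H2|].
        eapply perm_trans; [apply perm_skip, HR|].
        apply Permutation_middle.
      * intros d [Ed|Ed]; [subst; lra| auto].
      * intros a Ha. apply HA. apply (Permutation_in a (Permutation_sym HPA)). right; auto.
  - exists (x :: A), p. split.
    + apply AS_new. intros a Ha. apply (best_none L x E).
      apply (Permutation_in a (Permutation_sym HP)). apply in_or_app; left; auto.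
    + exists D. split; [|split; [auto|split; auto]].
      * eapply perm_trans; [apply Permutation_sym, Permutation_cons_append|].
        apply perm_skip; auto.
      * intros a [Ea|Ea]; [subst; lra| auto].
Qed.

Lemma main_ind : forall I I' L L' A p A' p',
  length I' = length I ->
  (forall j, (j < length I)%nat -> 1/3 < nth j I 0 /\ nth j I 0 <= nth j I' 0) ->
  Abs L A p -> Abs L' A' p' -> Inv A p A' p' ->
  (length (fold_left bf_step I L) <= length (fold_left bf_step I' L'))%nat.
Proof.
  induction I as [|x I IH]; intros [|x' I'] L L' A p A' p' Hlen Hj HL HL' HI;
    simpl in Hlen; try discriminate.
  - simpl.
    destruct HL as [D [HP [HD [_ HA]]]]; destruct HL' as [D' [HP' [HD' _]]].
    destruct HI as [_ [Hge [_ Hl]]].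
    rewrite (Permutation_length HP), (Permutation_length HP'), !length_app.
    specialize (Hge 0).
    rewrite (cnt_all (geb 0) A) in Hge by (intros a Ha; apply geb_true; specialize (HA a Ha); lra).
    pose proof (cnt_le_len (geb 0) A'). lia.
  - simpl.
    destruct (Hj 0%nat ltac:(simpl; lia)) as [Hx Hxx']. simpl in Hx, Hxx'.
    destruct (step_abs _ _ _ _ HL Hx) as [A2 [p2 [HS HL2]]].
    destruct (step_abs _ _ _ x' HL' ltac:(lra)) as [A2' [p2' [HS' HL2']]].
    apply (IH I' _ _ A2 p2 A2' p2'); auto.
    + intros j Hj'. apply (Hj (S j)). simpl; lia.
    + eapply inv_step; eauto.
Qed.

Theorem lemma17 (I I' : list R) (i : nat) :
  length I' = length I ->
  (forall j, (j < length I)%nat -> 1/3 < nth j I 0 <= 1) ->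
  (forall j, (j < length I')%nat -> 0 < nth j I' 0 <= 1) ->
  (i < length I)%nat ->
  nth i I 0 < nth i I' 0 ->
  (forall j, (j < length I)%nat -> j <> i -> nth j I' 0 = nth j I 0) ->
  (BF I <= BF I')%nat.
Proof.
  intros Hlen H1 H2 Hi Hlt Heq.
  unfold BF, bf_loads.
  apply (main_ind I I' nil nil nil 0 nil 0 Hlen).
  - intros j Hj. split; [apply H1; auto|].
    destruct (Nat.eq_dec j i) as [E|E]; [subst; lra|].
    rewrite Heq; auto; lra.
  - exists nil; repeat split; simpl; auto; intros _ [].
  - exists nil; repeat split; simpl; auto; intros _ [].
  - split; [|split; [|split]]; auto.
    intros a Y HY. apply Permutation_nil_cons in HY. contradiction.
Qed.
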